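(* Let $\mathbf{L}=(L,\le)$ be a nontrivial finite join-semilattice with greatest element $1$ satisfying property $( * )$, and let $(R,\vee,\circ)$ be a subsemiring of $(\mathrm{JM}_1(\mathbf{L}),\vee,\circ)$ such that $f_{a,b}\in R$ for all $a\in L\setminus\{1\}$, $b\in L$, and every $f\in R$ satisfies $f_{a,b}\le f$ for some $a\in L\setminus\{1\}$, $b\in L$. Then $(R,\vee)$ has a neutral element if and only if $1$ is join-irreducible and $\mathbf{L}$ is a lattice. If this neutral element exists, it is neither left nor right absorbing in $(R,\vee,\circ)$.
   Context: $\mathrm{JM}_1(\mathbf{L})$ is the set of maps $f:L\to L$ preserving binary joins with $f(1)=1$, a semiring under pointwise join and composition, ordered pointwise. $f_{a,b}(x)=b$ if $x\le a$ and $1$ otherwise. $\mathbf{L}$ satisfies $( * )$ if there exists $u\in L$ with $1\ne u\vee x$ for all $x\in L\setminus\{1\}$. $1$ is join-irreducible if $1\ne a\vee b$ for all $a,b\in L\setminus\{1\}$. A finite join-semilattice is a lattice iff it has a least element. An element $r$ is right absorbing if $s\circ r=r$ for all $s$, left absorbing if $r\circ s=r$ for all $s$. *)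

(* Defs.v *)
From mathcomp Require Import all_boot all_order.
Set Implicit Arguments. Unset Strict Implicit. Unset Printing Implicit Defensive.
Import Order.Theory.
Local Open Scope order_scope.

Section Defs.
Context {d : Order.disp_t} (L : finTJoinSemilatticeType d).

Definition JM1 (f : {ffun L -> L}) : Prop :=
  (forall x y : L, f (x `|` y) = f x `|` f y) /\ f \top = \top.

Definition fjoin (f g : {ffun L -> L}) : {ffun L -> L} := [ffun x => f x `|` g x].
Definition fcomp (f g : {ffun L -> L}) : {ffun L -> L} := [ffun x => f (g x)].

Definition fle (f g : {ffun L -> L}) : Prop := forall x : L, f x <= g x.

Definition fab (a b : L) : {ffun L -> L} := [ffun x => if x <= a then b else \top].

Definition is_subsemiring (R : {set {ffun L -> L}}) : Prop :=
  (exists f, f \in R) /\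
  (forall f, f \in R -> JM1 f) /\
  (forall f g, f \in R -> g \in R -> fjoin f g \in R) /\
  (forall f g, f \in R -> g \in R -> fcomp f g \in R).

Definition star_prop : Prop :=
  exists u : L, forall x : L, x != \top -> u `|` x != \top.

Definition top_join_irreducible : Prop :=
  forall a b : L, a != \top -> b != \top -> a `|` b != \top.

Definition is_lattice : Prop :=
  forall x y : L, exists m : L,
    [/\ m <= x, m <= y & forall z : L, z <= x -> z <= y -> z <= m].

Definition join_neutral (R : {set {ffun L -> L}}) (e : {ffun L -> L}) : Prop :=
  e \in R /\ forall f, f \in R -> fjoin e f = f /\ fjoin f e = f.

Definition right_absorbing (R : {set {ffun L -> L}}) (r : {ffun L -> L}) : Prop :=
  forall s, s \in R -> fcomp s r = r.
Definition left_absorbing (R : {set {ffun L -> L}}) (r : {ffun L -> L}) : Prop :=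
  forall s, s \in R -> fcomp r s = r.
End Defs.

(* Main.v *)
Require Import Defs.
From mathcomp Require Import all_boot all_order.
Import Order.Theory.
Local Open Scope order_scope.

Section Helpers.
Context {d : Order.disp_t} (L : finTJoinSemilatticeType d).

Lemma lat_of_bot (z : L) : (forall b, z <= b) -> is_lattice L.
Proof.
move=> hz x y.
have H : forall s : seq L, exists m : L,
   [/\ m <= x, m <= y & forall w, w \in s -> w <= x -> w <= y -> w <= m].
  elim=> [|w s [m [mx my ms]]].
    by exists z; split => //.
  case: (boolP ((w <= x) && (w <= y))) => [/andP [wx wy]|hw].
    exists (m `|` w); split; first by rewrite leUx mx wx.
      by rewrite leUx my wy.
    move=> v; rewrite inE => /orP [/eqP -> _ _|vs vx vy]; first by rewrite leUr.
    by apply: le_trans (ms v vs vx vy) _; rewrite leUl.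
  exists m; split => // v; rewrite inE => /orP [/eqP -> vx vy|vs vx vy].
    by move: hw; rewrite vx vy.
  exact: ms.
have [m [mx my ms]] := H (enum L).
exists m; split => // w; apply: ms; by rewrite mem_enum.
Qed.

Lemma bot_of_lat : is_lattice L -> exists z : L, forall b, z <= b.
Proof.
move=> hl.
have H : forall s : seq L, exists m : L, forall w, w \in s -> m <= w.
  elim=> [|w s [m ms]]; first by exists \top.
  have [m' [m'w m'm _]] := hl w m.
  exists m' => v; rewrite inE => /orP [/eqP ->|vs] //.
  exact: le_trans m'm (ms v vs).
have [m ms] := H (enum L).
by exists m => b; apply: ms; rewrite mem_enum.
Qed.

Lemma coatom (a0 : L) : a0 != \top -> top_join_irreducible L ->
  exists c : L, c != \top /\ forall w, w != \top -> w <= c.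
Proof.
move=> ha0 hirr.
have H : forall s : seq L, exists c : L,
   c != \top /\ forall w, w \in s -> w != \top -> w <= c.
  elim=> [|w s [c [ct cs]]]; first by exists a0.
  case: (boolP (w == \top)) => [wt|wt].
    exists c; split => // v; rewrite inE => /orP [/eqP ->|vs]; first by rewrite wt.
    exact: cs.
  exists (c `|` w); split; first exact: hirr.
  move=> v; rewrite inE => /orP [/eqP -> _|vs vt]; first by rewrite leUr.
  by apply: le_trans (cs v vs vt) _; rewrite leUl.
have [c [ct cs]] := H (enum L).
by exists c; split => // w; apply: cs; rewrite mem_enum.
Qed.

End Helpers.

Theorem proposition7p3 (d : Order.disp_t) (L : finTJoinSemilatticeType d)
    (R : {set {ffun L -> L}}) :
  (exists x : L, x != \top) ->
  star_prop L ->
  is_subsemiring R ->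
  (forall a b : L, a != \top -> fab a b \in R) ->
  (forall f, f \in R -> exists a b : L, a != \top /\ fle (fab a b) f) ->
  ((exists e, join_neutral R e) <-> (top_join_irreducible L /\ is_lattice L)) /\
  (forall e, join_neutral R e -> ~ left_absorbing R e /\ ~ right_absorbing R e).
Proof.
move=> [a0 ha0] _ [_ [RJM _]] Hfab _.
have key : forall e, join_neutral R e ->
   [/\ forall b, e a0 <= b, forall x, x != \top -> e x = e a0,
       e \top = \top & e a0 != \top].
  move=> e [eR en].
  have ele : forall f x, f \in R -> e x <= f x.
    move=> f x fR; have [h _] := en f fR.
    have := congr1 (fun g : {ffun L -> L} => g x) h; rewrite /fjoin ffunE => <-.
    by rewrite leUl.
  have hb : forall b, e a0 <= b.
    by move=> b; have := ele _ a0 (Hfab a0 b ha0); rewrite /fab ffunE lexx.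
  split => //.
  - move=> x xt; apply: le_anti; rewrite hb andbT.
    by have := ele _ x (Hfab x (e a0) xt); rewrite /fab ffunE lexx.
  - by have [_ ->] := RJM e eR.
  - apply/negP => /eqP zt; move: ha0.
    by rewrite (@le_anti _ _ a0 \top) ?eqxx // lex1 -zt hb.
split.
  split.
    move=> [e ne]; have [hb hx ht hz] := key e ne.
    split; last exact: (@lat_of_bot _ L _ hb).
    move=> a b at_ bt; apply/negP => /eqP hab.
    have [hj _] := RJM e ne.1.
    move: ht; rewrite -{1}hab hj (hx a at_) (hx b bt) joinxx => zt.
    by move: hz; rewrite zt eqxx.
  move=> [hirr hlat].
  have [z hz] := @bot_of_lat _ L hlat.
  have [c [ct hc]] := @coatom _ L _ ha0 hirr.
  exists (fab c z); split; first exact: Hfab.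
  have hle : forall f x, f \in R -> fab c z x <= f x.
    move=> f x fR; rewrite /fab ffunE; case: ifP => // hxc.
    case: (boolP (x == \top)) => [/eqP ->|xt]; first by have [_ ->] := RJM f fR.
    by rewrite hc in hxc.
  move=> f fR; split; apply/ffunP => x; rewrite /fjoin ffunE.
    exact/join_r/hle.
  exact/join_l/hle.
move=> e ne; have [hb hx ht hz] := key e ne.
have sR := Hfab a0 \top ha0.
have sE : forall x, fab a0 \top x = \top by move=> x; rewrite /fab ffunE; case: ifP.
split.
  move=> hl; have := hl _ sR; move/ffunP/(_ a0); rewrite /fcomp ffunE sE ht => h.
  by move: hz; rewrite -h eqxx.
move=> hr; have := hr _ sR; move/ffunP/(_ a0); rewrite /fcomp ffunE sE => h.
by move: hz; rewrite -h eqxx.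
Qed.
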